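(* Let $n \ge 2$ and let $\ell(0) \in \mathbb{N}_0^n$ be an arbitrary initial load vector of the random pairwise load balancing process described in the context, with $m=\sum_i \ell_i(0)$ tokens, average load $\varnothing = m/n$, and initial discrepancy $\Delta = \max_i \ell_i(0) - \min_i \ell_i(0) > 0$. Let $T$ be the first time step at which every node has load in $\{\mathrm{round}(\varnothing)-1, \mathrm{round}(\varnothing), \mathrm{round}(\varnothing)+1\}$. Then with high probability (i.e., with probability $1-O(1/n)$), $T = O(n\log \Delta + n\log n)$, where the constant hidden in $O(\cdot)$ is absolute (independent of $n$, $m$, $\Delta$ and $\ell(0)$).
   Context: Random pairwise load balancing process: $n$ nodes (complete graph), $m$ indistinguishable tokens. The load vector at time $t\in\mathbb{N}_0$ is $\ell(t)=(\ell_1(t),\dots,\ell_n(t))\in\mathbb{Z}^n$, where $\ell_i(t)$ is the number of tokens at node $i$. In each time step $t$, independently of everything before, an ordered pair $(u,v)$ of distinct nodes is chosen uniformly at random, and the loads are updated to $\ell_u(t+1)=\lceil(\ell_u(t)+\ell_v(t))/2\rceil$, $\ell_v(t+1)=\lfloor(\ell_u(t)+\ell_v(t))/2\rfloor$; all other loads are unchanged. The average load is $\varnothing=m/n$ and $\mathrm{round}(\varnothing)$ denotes $\varnothing$ rounded to the nearest integer. *)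

(* Defs.v *)
From mathcomp Require Import all_boot.
Set Implicit Arguments. Unset Strict Implicit. Unset Printing Implicit Defensive.

Definition Pair (n : nat) : finType := {p : 'I_n * 'I_n | p.1 != p.2}.

Definition load (n : nat) := {ffun 'I_n -> nat}.

Definition step n (l : load n) (p : Pair n) : load n :=
  let u := (val p).1 in let v := (val p).2 in let s := l u + l v in
  [ffun i => if i == u then uphalf s else if i == v then s./2 else l i].

Definition traj n (l0 : load n) (s : seq (Pair n)) (k : nat) : load n :=
  foldl (@step n) l0 (take k s).

Definition total n (l : load n) : nat := \sum_(i < n) l i.

(* round(m/n), ties rounded up: floor((2m+n)/(2n)) *)
Definition round_avg (m n : nat) : nat := (2 * m + n) %/ (2 * n).

Definition balanced n (r : nat) (l : load n) : bool :=
  [forall i, (r <= l i + 1) && (l i <= r + 1)].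

Definition maxload n (l : load n) : nat := \max_(i < n) l i.
Definition minload n (l : load n) : nat := \big[minn/maxload l]_(i < n) l i.
Definition discrepancy n (l : load n) : nat := maxload l - minload l.

(* the event "T <= t": balanced at some time k <= t *)
Definition hit_by n (l0 : load n) t (s : t.-tuple (Pair n)) : bool :=
  [exists k : 'I_t.+1,
     balanced (round_avg (total l0) n) (traj l0 s k)].

(* number of the (n(n-1))^t equally likely step sequences of length t
   for which T > t *)
Definition bad_count n (l0 : load n) t : nat :=
  #|[set s : t.-tuple (Pair n) | ~~ hit_by l0 s]|.

(* Main.v *)
Require Import Defs.
From Stdlib Require Import ZArith Lia.
Module ZL.
Open Scope Z_scope.
Definition FZ (t : Z) := Z.max 0 (t-1) * Z.max 0 (t-1) + Z.max 0 (-1-t) * Z.max 0 (-1-t).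
Ltac mx t := let H := fresh in destruct (Z.max_spec 0 t) as [[? H]|[? H]]; try rewrite H in *; clear H.
Lemma convZ X Y A B : A + B = X + Y -> B <= A <= B + 1 -> FZ A + FZ B <= FZ X + FZ Y.
Proof. intros H1 H2. assert (HA : A = B \/ A = B + 1) by lia.
assert (HY : Y = A + B - X) by lia. subst Y. unfold FZ.
destruct HA; subst A; mx (B-1); mx (-1-B); mx (B+1-1); mx (-1-(B+1)); mx (X-1); mx (-1-X);
 mx (B+B-X-1); mx (-1-(B+B-X)); mx (B+1+B-X-1); mx (-1-(B+1+B-X));
 try lia; pose proof (Z.square_nonneg (X-B)); nia. Qed.
Lemma decZ X Y A B : A + B = X + Y -> B <= A <= B + 1 -> Y + 2 <= X -> (2 <= X \/ Y <= -2) ->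
  9 * (FZ A + FZ B) + (X - Y) * (X - Y) <= 9 * (FZ X + FZ Y).
Proof. intros H1 H2 H3 H4. assert (HA : A = B \/ A = B + 1) by lia.
assert (HY : Y = A + B - X) by lia. subst Y. unfold FZ.
destruct HA; subst A; mx (B-1); mx (-1-B); mx (B+1-1); mx (-1-(B+1)); mx (X-1); mx (-1-X);
 mx (B+B-X-1); mx (-1-(B+B-X)); mx (B+1+B-X-1); mx (-1-(B+1+B-X));
 try lia; pose proof (Z.square_nonneg (X-B)); nia. Qed.
End ZL.

From mathcomp Require Import all_boot.
From mathcomp Require Import zify.
Require Import Defs.
Set Implicit Arguments. Unset Strict Implicit. Unset Printing Implicit Defensive.

Definition phi (r a : nat) : nat := (a - r.+1) * (a - r.+1) + (r - a.+1) * (r - a.+1).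

Lemma phiZ r a : Z.of_nat (phi r a) = ZL.FZ (Z.of_nat a - Z.of_nat r).
Proof.
rewrite /phi /ZL.FZ -!multE -!plusE Nat2Z.inj_add !Nat2Z.inj_mul.
have -> : Z.of_nat (a - r.+1) = Z.max 0 (Z.of_nat a - Z.of_nat r - 1) by lia.
have -> : Z.of_nat (r - a.+1) = Z.max 0 (-1 - (Z.of_nat a - Z.of_nat r)) by lia.
by [].
Qed.

Lemma inj_add_phi r a b : Z.of_nat (phi r a + phi r b) = (ZL.FZ (Z.of_nat a - Z.of_nat r) + ZL.FZ (Z.of_nat b - Z.of_nat r))%Z.
Proof. by rewrite -plusE Nat2Z.inj_add !phiZ. Qed.

Lemma pair_conv r x y a b : a + b = x + y -> b <= a <= b.+1 ->
  phi r a + phi r b <= phi r x + phi r y.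
Proof.
move=> H1 H2; apply/leP; apply Nat2Z.inj_le.
rewrite !inj_add_phi; apply: ZL.convZ; lia.
Qed.

Lemma pair_dec r x y a b : a + b = x + y -> b <= a <= b.+1 -> y.+2 <= x ->
  (r.+2 <= x) || (y.+2 <= r) ->
  9 * (phi r a + phi r b) + (x - y) * (x - y) <= 9 * (phi r x + phi r y).
Proof.
move=> H1 H2 H3 H4.
have := @ZL.decZ (Z.of_nat x - Z.of_nat r) (Z.of_nat y - Z.of_nat r)
   (Z.of_nat a - Z.of_nat r) (Z.of_nat b - Z.of_nat r).
rewrite -!phiZ.
move: (phi r a) (phi r b) (phi r x) (phi r y) => pa pb px py h.
have {}h := h ltac:(lia) ltac:(lia) ltac:(lia) ltac:(lia).
nia.
Qed.

Lemma halfs s : uphalf s + s./2 = s /\ s./2 <= uphalf s <= (s./2).+1.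
Proof. have := odd_double_half s; rewrite uphalf_half; case: (odd s) => /=; lia. Qed.

Lemma sumD2 n (F : 'I_n -> nat) (u v : 'I_n) : u != v ->
  \sum_i F i = F u + F v + \sum_(i | (i != u) && (i != v)) F i.
Proof.
move=> uv; rewrite (bigD1 u) //= (bigD1 v) /=; last by rewrite eq_sym.
by rewrite addnA; congr (_ + _); apply: eq_bigl => i; rewrite andbC.
Qed.

Section St.
Variables (n : nat) (l : load n) (p : Pair n).
Let u := (val p).1.
Let v := (val p).2.
Lemma uv : u != v. Proof. exact: (valP p). Qed.
Lemma step_u : step l p u = uphalf (l u + l v). Proof. by rewrite /step ffunE eqxx. Qed.
Lemma step_v : step l p v = (l u + l v)./2.
Proof. by rewrite /step ffunE eq_sym (negbTE uv) eqxx. Qed.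
Lemma step_o i : i != u -> i != v -> step l p i = l i.
Proof. by move=> /negbTE a /negbTE b; rewrite /step ffunE a b. Qed.

Lemma total_step : total (step l p) = total l.
Proof.
rewrite /total (sumD2 _ uv) [in RHS](sumD2 _ uv) step_u step_v.
have [h _] := halfs (l u + l v); rewrite h; congr (_ + _).
by apply: eq_bigr => i /andP [a b]; rewrite step_o.
Qed.

Definition Psi r (l' : load n) := \sum_i phi r (l' i).

Lemma Psi_step r : Psi r (step l p) + (phi r (l u) + phi r (l v)) =
   Psi r l + (phi r (uphalf (l u + l v)) + phi r ((l u + l v)./2)).
Proof.
rewrite /Psi (sumD2 _ uv) [in RHS](sumD2 _ uv) step_u step_v.
rewrite (eq_bigr (fun i => phi r (l i))); last by move=> i /andP [a b]; rewrite step_o.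
move: (phi r _) (phi r _) (phi r (l u)) (phi r (l v)) (\sum_(i | _) _) => a b c d e; lia.
Qed.
End St.

Lemma two_mul_le m k : 2 * m * k <= m * m + k * k.
Proof. case: (leqP m k) => h.
  have [e ->] : exists e, k = m + e by exists (k - m); lia.
  nia.
have [e ->] : exists e, m = k + e by exists (m - k); lia.
nia.
Qed.

Lemma per_gen A C x y X : 9 * A + (x - y) * (x - y) <= 9 * C -> y.+2 <= x ->
  9 * A + 2 * X * x <= 9 * C + X * X + 2 * X * y.
Proof.
move=> h hy; have [D ex] : exists D, x = y + D by exists (x - y); lia.
subst x; rewrite addKn in h; have := two_mul_le X D; nia.
Qed.

Lemma per_flat x y X : x <= y.+1 -> 2 <= X -> 2 * X * x <= X * X + 2 * X * y.
Proof. move=> h1 h2; nia. Qed.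

Lemma final_hi k r X M m SG SH : r * (2 * k.+1) <= 2 * m + k.+1 -> 2 * m + k.+1 < r.+1 * (2 * k.+1) ->
  M + (r + X) = m -> 2 <= X ->
  9 * SG + k * (2 * X * (r + X)) <= 9 * SH + k * (X * X) + 2 * X * M ->
  9 * SG + k * (X.-1 * X.-1) <= 9 * SH.
Proof.
move=> h1 h2 h3 h4 h5.
have e1 : X * (2 * m) <= X * (r * (2 * k.+1) + k.+1) by rewrite leq_mul2l; lia.
have [Y ey] : exists Y, X = Y.+2 by exists (X - 2); lia.
subst X; rewrite /= in h5 *; subst m.
nia.
Qed.

Lemma final_lo k r X M m SG SH : r * (2 * k.+1) <= 2 * m + k.+1 -> 2 * m + k.+1 < r.+1 * (2 * k.+1) ->
  M + (r - X) = m -> 2 <= X -> X <= r ->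
  9 * SG + 2 * X * M <= 9 * SH + k * (X * X) + k * (2 * X * (r - X)) ->
  9 * SG + k * (X.-1 * X.-1) <= 9 * SH.
Proof.
move=> h1 h2 h3 h4 h0 h5.
have e1 : X * (r * (2 * k.+1)) <= X * (2 * m + k.+1) by rewrite leq_mul2l; lia.
have [Y ey] : exists Y, X = Y.+2 by exists (X - 2); lia.
have [R er] : exists R, r = R + X by exists (r - X); lia.
subst r; rewrite addnK in h3 h5; subst X; rewrite /= in h5 *; subst m.
nia.
Qed.

Lemma sumC1_const n (u : 'I_n) c : \sum_(v | v != u) c = n.-1 * c.
Proof.
rewrite (eq_bigl (fun v => v \in predC1 u)); last by move=> v; rewrite inE.
by rewrite sum_nat_const cardC1 card_ord.
Qed.

Lemma sum_others n (l : load n) u : \sum_(v | v != u) l v + l u = total l.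
Proof. by rewrite /total [RHS](bigD1 u) //= addnC. Qed.

Lemma sum_aff n (P : pred 'I_n) (F g : 'I_n -> nat) a :
  \sum_(i | P i) (a * F i + g i) = a * \sum_(i | P i) F i + \sum_(i | P i) g i.
Proof. by rewrite big_split big_distrr. Qed.

Section Row.
Variables (n : nat) (l : load n).
Hypothesis n0 : 0 < n.
Let m := total l.
Let r := round_avg m n.
Definition G (u v : 'I_n) := phi r (uphalf (l u + l v)) + phi r ((l u + l v)./2).
Definition H (u v : 'I_n) := phi r (l u) + phi r (l v).

Lemma rfacts : r * (2 * n) <= 2 * m + n < r.+1 * (2 * n).
Proof. rewrite /r /round_avg. apply/andP; split.
  by rewrite leq_divM.
by rewrite ltn_ceil // muln_gt0 n0.
Qed.

Lemma row u : 9 * \sum_(v | v != u) G u v + n.-1 * phi r (l u) <= 9 * \sum_(v | v != u) H u v.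
Proof.
have [rf1 rf2] := andP rfacts.
have so := sum_others l u; rewrite -/m in so.
have [flat|nflat] := boolP ((r <= (l u).+1) && (l u <= r.+1)).
  have -> : phi r (l u) = 0 by rewrite /phi; move/andP: flat => [f1 f2]; nia.
  rewrite muln0 addn0 leq_mul2l /=; apply: leq_sum => v _.
  rewrite /G /H; have [h1 h2] := halfs (l u + l v); apply: pair_conv => //.
have [high|low] : (r.+2 <= l u) \/ ((l u).+2 <= r).
  by move: nflat; rewrite negb_and -!ltnNge; case/orP; [right|left]; lia.
- set x := l u in so high *; set X := x - r.
  have per : forall v, v != u -> 9 * G u v + 2 * X * x <= 9 * H u v + X * X + 2 * X * l v.
    move=> v _; rewrite /G /H -/x; have [h1 h2] := halfs (x + l v).
    case: (leqP (l v).+2 x) => hv.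
      move: (hv) => hv0; apply: per_gen hv0.
      by apply: pair_dec h1 h2 hv _; rewrite high.
    rewrite -[9 * _ + _ * _ + _]addnA leq_add //.
      by rewrite leq_mul2l /=; apply: pair_conv h1 h2.
    by apply: per_flat; lia.
  have : \sum_(v | v != u) (9 * G u v + 2 * X * x) <= \sum_(v | v != u) (9 * H u v + (X * X + 2 * X * l v)) by apply: leq_sum => v hv; rewrite addnA; exact: per.
  rewrite (sum_aff _ (G u)) (sum_aff _ (H u)).
  move: (\sum_(i | _) G u i) (\sum_(i | _) H u i) => SG SH.
  rewrite !big_split /= !sumC1_const -!big_distrr /=.
  have -> : phi r x = (X.-1) * (X.-1) by rewrite /phi; lia.
  move=> hh.
  apply: (@final_hi n.-1 r X (\sum_(v | v != u) l v) m); rewrite ?prednK //; try lia.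
  rewrite -(_ : x = r + X); last by lia.
  move: hh; rewrite -/X; move: (\sum_(v | v != u) l v) => Q; nia.
- set x := l u in so low *; set X := r - x.
  have per : forall v, v != u -> 9 * G u v + 2 * X * l v <= 9 * H u v + X * X + 2 * X * x.
    move=> v _; rewrite /G /H -/x; have [h1 h2] := halfs (x + l v).
    case: (leqP x.+2 (l v)) => hv.
      move: (hv) => hv0; apply: per_gen hv0; rewrite [phi r x + _]addnC.
      apply: pair_dec => //; first by rewrite h1 addnC.
      by rewrite low orbT.
    rewrite -[9 * _ + _ * _ + _]addnA leq_add //.
      by rewrite leq_mul2l /=; apply: pair_conv h1 h2.
    by apply: per_flat; lia.
  have : \sum_(v | v != u) (9 * G u v + 2 * X * l v) <= \sum_(v | v != u) (9 * H u v + (X * X + 2 * X * x)) by apply: leq_sum => v hv; rewrite addnA; exact: per.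
  rewrite (sum_aff _ (G u)) (sum_aff _ (H u)).
  move: (\sum_(i | _) G u i) (\sum_(i | _) H u i) => SG SH.
  rewrite !big_split /= !sumC1_const -!big_distrr /=.
  have -> : phi r x = (X.-1) * (X.-1) by rewrite /phi; lia.
  move=> hh.
  apply: (@final_lo n.-1 r X (\sum_(v | v != u) l v) m); rewrite ?prednK //; try lia.
  rewrite -(_ : x = r - X); last by lia.
  move: hh; rewrite -/X; move: (\sum_(v | v != u) l v) => Q; nia.
Qed.
End Row.

Lemma pair_sum n (F : 'I_n -> 'I_n -> nat) :
  \sum_(p : Pair n) F (val p).1 (val p).2 = \sum_u \sum_(v | v != u) F u v.
Proof.
rewrite pair_big_dep /= (reindex_omap (val : Pair n -> 'I_n * 'I_n) insub).
  apply: eq_bigl => p; rewrite valK eqxx andbT eq_sym; symmetry; exact: (valP p).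
by move=> [i j] /= h; rewrite insubT //= eq_sym.
Qed.

Lemma state_ineq n (l : load n) : 0 < n ->
  9 * \sum_(p : Pair n) Psi (round_avg (total l) n) (step l p) + n.-1 * Psi (round_avg (total l) n) l
    <= 9 * #|{: Pair n}| * Psi (round_avg (total l) n) l.
Proof.
move=> n0; set r := round_avg (total l) n.
have S : \sum_(p : Pair n) (Psi r (step l p) + H l (val p).1 (val p).2) =
         \sum_(p : Pair n) (Psi r l + G l (val p).1 (val p).2).
  by apply: eq_bigr => p _; exact: (Psi_step l p r).
rewrite [LHS]big_split [RHS]big_split /= in S.
rewrite sum_nat_const in S.
rewrite !(pair_sum (H l)) !(pair_sum (G l)) in S.
have R : \sum_u (9 * \sum_(v | v != u) G l u v + n.-1 * phi r (l u)) <=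
         \sum_u (9 * \sum_(v | v != u) H l u v).
  by apply: leq_sum => u _; exact: row.
rewrite big_split /= -!big_distrr /= in R.
rewrite (_ : \sum_u phi r (l u) = Psi r l) // in R.
move: R S; rewrite cardE.
move: (\sum_(u < n) \sum_(v | v != u) G l u v) (\sum_(u < n) \sum_(v | v != u) H l u v) => a b.
move: (\sum_(p : Pair n) Psi r (step l p)) (Psi r l) => c d.
nia.
Qed.

Lemma tuple_sum (T : finType) t (F : t.+1.-tuple T -> nat) :
  \sum_(s : t.+1.-tuple T) F s = \sum_(p : T) \sum_(s : t.-tuple T) F [tuple of p :: s].
Proof.
rewrite pair_big /=.
rewrite [LHS](reindex (fun q : T * t.-tuple T => [tuple of q.1 :: q.2])) /=; first by [].
exists (fun s => (thead s, [tuple of behead s])) => [[x s] _ | s _] /=.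
  by rewrite theadE; congr pair; apply: val_inj.
by rewrite [in RHS](tuple_eta s).
Qed.

Lemma traj_cons n (l : load n) t p (s : t.-tuple (Pair n)) :
  traj l [tuple of p :: s] t.+1 = traj (step l p) s t.
Proof. by []. Qed.

Lemma traj0 n (l : load n) s : traj l s 0 = l.
Proof. by rewrite /traj take0. Qed.

Lemma W_bound n t (l : load n) : 0 < n ->
  9 ^ t * \sum_(s : t.-tuple (Pair n)) Psi (round_avg (total l) n) (traj l s t)
   <= (9 * #|{: Pair n}| - n.-1) ^ t * Psi (round_avg (total l) n) l.
Proof.
move=> n0; elim: t l => [|t IH] l.
  rewrite expn0 !mul1n (eq_bigr (fun _ => Psi (round_avg (total l) n) l)); last by move=> s _; rewrite traj0.
  by rewrite sum_nat_const card_tuple expn0 mul1n.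
set r := round_avg (total l) n.
rewrite tuple_sum.
have step1 : forall p : Pair n, 9 ^ t * \sum_(s : t.-tuple (Pair n)) Psi r (traj l [tuple of p :: s] t.+1)
    <= (9 * #|{: Pair n}| - n.-1) ^ t * Psi r (step l p).
  by move=> p; have := IH (step l p); rewrite total_step -/r.
have : \sum_(p : Pair n) 9 ^ t * \sum_(s : t.-tuple (Pair n)) Psi r (traj l [tuple of p :: s] t.+1)
   <= \sum_(p : Pair n) (9 * #|{: Pair n}| - n.-1) ^ t * Psi r (step l p).
  by apply: leq_sum => p _; exact: step1.
rewrite -big_distrr /= -big_distrr /= => h.
have := state_ineq l n0; rewrite -/r => h2.
have h3 : 9 * \sum_(p : Pair n) Psi r (step l p) <= (9 * #|{: Pair n}| - n.-1) * Psi r l.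
  by rewrite mulnBl; move: h2; move: (\sum_(p : Pair n) _) => P; lia.
rewrite !expnS -!mulnA.
apply: leq_trans (leq_mul (leqnn 9) h) _.
rewrite mulnCA [X in _ <= X]mulnCA; apply: leq_mul => //; exact: h3.
Qed.

Lemma bern x y j : y <= x -> y * x ^ j >= y ^ j * (y + j * (x - y)).
Proof.
move=> yx; have [e ->] : exists e, x = y + e by exists (x - y); lia.
rewrite addKn; elim: j => [|j IH]; first by rewrite !expn0; lia.
rewrite !expnS.
move: IH; move: (y ^ j) ((y + e) ^ j) => P Q IH.
have h1 : (y + e) * (P * (y + j * e)) <= (y + e) * (y * Q) by rewrite leq_mul2l IH orbT.
have h2 : y * (y + j.+1 * e) <= (y + e) * (y + j * e) by nia.
have h3 : P * (y * (y + j.+1 * e)) <= P * ((y + e) * (y + j * e)) by rewrite leq_mul2l h2 orbT.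
nia.
Qed.

Lemma bern2 x y j : y <= x -> y <= j * (x - y) -> 0 < j -> 2 * y ^ j <= x ^ j.
Proof.
move=> h1 h2 h3; case: (posnP y) => [->|yp]; first by rewrite exp0n // muln0.
have := bern j h1.
have : y ^ j * (2 * y) <= y ^ j * (y + j * (x - y)) by rewrite leq_mul2l; lia.
move=> a b; rewrite -(leq_pmul2l yp); apply: leq_trans (leq_trans a b).
move: (y ^ j) => P; nia.
Qed.

Lemma pow_mono a b c : a <= b -> a ^ c <= b ^ c.
Proof. by move=> h; elim: c => // c IH; rewrite !expnS leq_mul. Qed.

Lemma maxload_ge n (l : load n) i : l i <= maxload l.
Proof. by rewrite /maxload (bigD1 i) //= leq_maxl. Qed.

Lemma minload_le n (l : load n) i : minload l <= l i.
Proof.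
rewrite /minload; have : i \in index_enum 'I_n by rewrite mem_index_enum.
elim: (index_enum _) => // j s IH; rewrite inE big_cons /= => /orP [/eqP <-|h].
  exact: geq_minl.
exact: leq_trans (geq_minr _ _) (IH h).
Qed.

Lemma Psi0_le n (l : load n) : 0 < n ->
  Psi (round_avg (total l) n) l <= n * (discrepancy l * discrepancy l).
Proof.
move=> n0; set r := round_avg (total l) n; set mx := maxload l; set mn := minload l.
have hm1 : total l <= n * mx.
  rewrite /total -[n in n * _]card_ord -sum_nat_const; apply: leq_sum => i _; exact: maxload_ge.
have hm2 : n * mn <= total l.
  rewrite /total -[n in n * _]card_ord -sum_nat_const; apply: leq_sum => i _; exact: minload_le.
have /andP [rf1 rf2] : r * (2 * n) <= 2 * total l + n < r.+1 * (2 * n).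
  apply/andP; split; first by rewrite leq_divM.
  by rewrite ltn_ceil // muln_gt0 n0.
have r1 : r <= mx.
  rewrite leqNgt; apply/negP => h.
  have : mx.+1 * (2 * n) <= r * (2 * n) by rewrite leq_mul2r h orbT.
  lia.
have r2 : mn <= r.
  rewrite leqNgt; apply/negP => h.
  have : r.+1 * (2 * n) <= mn * (2 * n) by rewrite leq_mul2r h orbT.
  lia.
rewrite /Psi /discrepancy -/mx -/mn -[n in n * _]card_ord -sum_nat_const.
apply: leq_sum => i _.
have := maxload_ge l i; have := minload_le l i; rewrite -/mx -/mn => a b.
rewrite /phi.
case: (leqP r (l i)) => h.
  have -> : r - (l i).+1 = 0 by lia.
  rewrite muln0 addn0; apply: leq_mul; lia.
have -> : l i - r.+1 = 0 by lia.
rewrite muln0 add0n; apply: leq_mul; lia.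
Qed.

Lemma bad_le n (l0 : load n) t :
  bad_count l0 t <= \sum_(s : t.-tuple (Pair n)) Psi (round_avg (total l0) n) (traj l0 s t).
Proof.
rewrite /bad_count -sum1_card big_mkcond /=; apply: leq_sum => s _.
rewrite inE; case: ifP => // nh.
set r := round_avg (total l0) n.
have nb : ~~ balanced r (traj l0 s t).
  move: nh; apply: contra => b; apply/existsP; exists ord_max; exact: b.
move/forallPn: nb => [i hi].
rewrite /Psi (bigD1 i) //=.
have : 0 < phi r (traj l0 s t i) by rewrite /phi; move: hi; rewrite negb_and -!ltnNge; case/orP => h; nia.
lia.
Qed.

Lemma cardPair n : #|{: Pair n}| <= n * n.
Proof.
by rewrite card_sig; apply: leq_trans (max_card _) _; rewrite card_prod card_ord.
Qed.

Theorem theorem1 :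
  exists C1 C2 : nat,
  forall (n : nat) (l0 : load n),
    2 <= n -> 0 < discrepancy l0 ->
    let t := C1 * n * (up_log 2 (discrepancy l0) + up_log 2 n) in
    n * bad_count l0 t <= C2 * #|{: Pair n}| ^ t.
Proof.
exists 36, 1 => n l0 n2 D0; cbv zeta.
set t := 36 * n * _.
rewrite mul1n.
have n0 : 0 < n by lia.
have hb := bad_le l0 t.
have hw := W_bound t l0 n0.
have hp := Psi0_le l0 n0.
have hN := cardPair n.
have hD := @up_logP 2 (discrepancy l0) isT.
have hn := @up_logP 2 n isT.
move: hb hw hp hN hD hn.
rewrite /t; move: (discrepancy l0) (up_log 2 (discrepancy l0)) (up_log 2 n) => D a b.
move: (bad_count _ _) (\sum_(s : _) _) (Psi _ l0) (#|{: Pair n}|) => bad S P0 N.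
move=> hb hw hp hN hD hn.
set y := 9 * N - n.-1.
have hj : 2 * y ^ (18 * n) <= (9 * N) ^ (18 * n).
  apply: bern2; [lia | | lia].
  rewrite /y; case: (leqP n.-1 (9 * N)) => h; last lia.
  have -> : 9 * N - (9 * N - n.-1) = n.-1 by lia.
  have [k ek] : exists k, n = k.+2 by exists (n - 2); lia.
  subst n; simpl in *; nia.
have hc := pow_mono (2 * (a + b)) hj.
rewrite expnMn -!expnM in hc.
have ht : 18 * n * (2 * (a + b)) = 36 * n * (a + b) by lia.
rewrite ht in hc.
have h2 : n * (D * D) * n <= 2 ^ (2 * (a + b)).
  rewrite mulnDr expnD !mul2n -!addnn !expnD.
  have := leq_mul (leq_mul hD hD) (leq_mul hn hn); nia.
move: hc hw h2; set T := 36 * n * (a + b) => hc hw h2.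
rewrite expnMn in hc.
rewrite -(@leq_pmul2l (9 ^ T)); last by rewrite expn_gt0.
apply: (leq_trans _ hc).
have e1 : 9 ^ T * (n * bad) <= n * (y ^ T * P0).
  rewrite mulnCA leq_mul2l; apply/orP; right.
  exact: leq_trans (leq_mul (leqnn _) hb) hw.
apply: (leq_trans e1).
have e2 : n * (y ^ T * P0) <= y ^ T * (n * (D * D) * n).
  rewrite mulnCA leq_mul2l; apply/orP; right.
  by rewrite mulnC; apply: leq_mul.
apply: (leq_trans e2).
by rewrite mulnC leq_mul2r h2 orbT.
Qed.
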